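(* Let $A_1,A_2,A_3\subset\mathbb{R}^3$ be finite sets with $|A_1|=3$, $|A_2|=2$, $|A_3|=1$ such that $A_1\cup A_2\cup A_3$ is a set of $6$ points in general position. Then there is a unique triple of mutually orthogonal affine planes $H_1,H_2,H_3$ with $A_i\subset H_i$ for $i=1,2,3$.
   Context: A finite set $X\subset\mathbb{R}^3$ is in general position if no $3$ points of $X$ are collinear, no $4$ are coplanar, no $6$ lie in the union of $2$ orthogonal planes, and no $7$ lie in the union of $3$ mutually orthogonal planes. Affine planes are (mutually) orthogonal if their normal vectors are pairwise orthogonal. *)

(* Defs.v *)
From mathcomp Require Import all_boot all_order all_algebra.
From mathcomp Require Import reals.
Set Implicit Arguments. Unset Strict Implicit. Unset Printing Implicit Defensive.
Import Order.TTheory GRing.Theory Num.Theory.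
Local Open Scope ring_scope.

Section Geom.
Variable R : realType.
Notation pt := 'rV[R]_3.

Definition dotv (u v : pt) : R := \sum_(i < 3) u 0 i * v 0 i.

Definition hyperplane (n : pt) (c : R) : pt -> Prop := fun x => dotv n x = c.

Definition is_plane (H : pt -> Prop) : Prop :=
  exists n c, n != 0 /\ forall x, H x <-> hyperplane n c x.

Definition is_line (L : pt -> Prop) : Prop :=
  exists (p d : pt), d != 0 /\ forall x, L x <-> exists t : R, x = p + t *: d.

Definition orth_planes (H1 H2 : pt -> Prop) : Prop :=
  exists n1 c1 n2 c2, [/\ n1 != 0, n2 != 0,
    (forall x, H1 x <-> hyperplane n1 c1 x),
    (forall x, H2 x <-> hyperplane n2 c2 x) & dotv n1 n2 = 0].

Definition mutually_orth3 (H1 H2 H3 : pt -> Prop) : Prop :=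
  [/\ orth_planes H1 H2, orth_planes H1 H3 & orth_planes H2 H3].

Definition no_k_in (k : nat) (X : seq pt) (S : pt -> Prop) : Prop :=
  forall Y : seq pt, uniq Y -> size Y = k -> {subset Y <= X} ->
    ~ (forall y, y \in Y -> S y).

Definition general_position (X : seq pt) : Prop :=
  [/\ uniq X,
      (forall L, is_line L -> no_k_in 3 X L),
      (forall H, is_plane H -> no_k_in 4 X H),
      (forall H1 H2, orth_planes H1 H2 -> no_k_in 6 X (fun x => H1 x \/ H2 x))
    & (forall H1 H2 H3, mutually_orth3 H1 H2 H3 ->
         no_k_in 7 X (fun x => [\/ H1 x, H2 x | H3 x]))].

End Geom.

(* Main.v *)
Require Import Defs.
From mathcomp Require Import all_boot all_order all_algebra.
From mathcomp Require Import reals.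
From mathcomp Require Import ring lra.
Import Order.TTheory GRing.Theory Num.Theory.
Local Open Scope ring_scope.
Set Implicit Arguments. Unset Strict Implicit.

Section S.
Variable R : realType.
Notation pt := 'rV[R]_3.
Definition i0 : 'I_3 := @Ordinal 3 0 isT.
Definition i1 : 'I_3 := @Ordinal 3 1 isT.
Definition i2 : 'I_3 := @Ordinal 3 2 isT.

Lemma dotE (u v : pt) : dotv u v = u 0 i0 * v 0 i0 + u 0 i1 * v 0 i1 + u 0 i2 * v 0 i2.
Proof.
rewrite /dotv !big_ord_recr big_ord0 /= add0r.
have e0 : (widen_ord (leqnSn 2) (widen_ord (leqnSn 1) ord_max)) = i0 by apply/val_inj.
have e1 : (widen_ord (leqnSn 2) ord_max) = i1 by apply/val_inj.
have e2 : (@ord_max 2) = i2 by apply/val_inj.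
by rewrite e0 e1 e2.
Qed.

Lemma eq3 (u v : pt) : u 0 i0 = v 0 i0 -> u 0 i1 = v 0 i1 -> u 0 i2 = v 0 i2 -> u = v.
Proof.
move=> h0 h1 h2; apply/matrixP => i j; rewrite [i]ord1.
case: j => [[|[|[|m]]] Hm] //.
- by have -> : Ordinal Hm = i0 by apply/val_inj.
- by have -> : Ordinal Hm = i1 by apply/val_inj.
- by have -> : Ordinal Hm = i2 by apply/val_inj.
Qed.

Implicit Types (u v w m x y z e : pt).
Definition mk3_def (a b c : R) : pt :=
  \row_(i < 3) (if i == i0 then a else if i == i1 then b else c).
Fact mk3_key : unit. Proof. by []. Qed.
Definition mk3 := locked_with mk3_key mk3_def.
Lemma mk3_0 a b c : mk3 a b c 0 i0 = a. Proof. by rewrite /mk3 unlock mxE. Qed.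
Lemma mk3_1 a b c : mk3 a b c 0 i1 = b. Proof. by rewrite /mk3 unlock mxE. Qed.
Lemma mk3_2 a b c : mk3 a b c 0 i2 = c. Proof. by rewrite /mk3 unlock mxE. Qed.
Definition cross (u v : pt) : pt :=
  mk3 (u 0 i1 * v 0 i2 - u 0 i2 * v 0 i1)
      (u 0 i2 * v 0 i0 - u 0 i0 * v 0 i2)
      (u 0 i0 * v 0 i1 - u 0 i1 * v 0 i0).
Lemma cross0 u v : cross u v 0 i0 = u 0 i1 * v 0 i2 - u 0 i2 * v 0 i1.
Proof. exact: mk3_0. Qed.
Lemma cross1 u v : cross u v 0 i1 = u 0 i2 * v 0 i0 - u 0 i0 * v 0 i2.
Proof. exact: mk3_1. Qed.
Lemma cross2 u v : cross u v 0 i2 = u 0 i0 * v 0 i1 - u 0 i1 * v 0 i0.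
Proof. exact: mk3_2. Qed.

Ltac crd := rewrite ?dotE; do 3 rewrite ?mxE ?cross0 ?cross1 ?cross2 ?mk3_0 ?mk3_1 ?mk3_2.

Lemma lin_comb (a b x y e : R) : e = a * x + b * y -> x = 0 -> y = 0 -> e = 0.
Proof. by move=> -> -> ->; ring. Qed.

Lemma dot_crossl u v : dotv (cross u v) u = 0. Proof. crd; ring. Qed.
Lemma dot_crossr u v : dotv (cross u v) v = 0. Proof. crd; ring. Qed.
Lemma dotC u v : dotv u v = dotv v u. Proof. crd; ring. Qed.
Lemma dotZl k u v : dotv (k *: u) v = k * dotv u v. Proof. crd; ring. Qed.
Lemma dotBr w u v : dotv w (u - v) = dotv w u - dotv w v. Proof. crd; ring. Qed.
Lemma dotDr w u v : dotv w (u + v) = dotv w u + dotv w v. Proof. crd; ring. Qed.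
Lemma dot0l u : dotv 0 u = 0. Proof. crd; ring. Qed.
Lemma triple (a b c : pt) : dotv (cross a b) c = - dotv (cross a c) b. Proof. crd; ring. Qed.
Lemma lagrange x y : dotv (cross x y) (cross x y) =
   dotv x x * dotv y y - dotv x y ^+ 2. Proof. crd; ring. Qed.
Lemma crossC u v : cross u v = - cross v u.
Proof. apply: eq3; crd; ring. Qed.

Lemma dot_gt0 u : u != 0 -> 0 < dotv u u.
Proof.
move=> hu; rewrite lt_def; apply/andP; split; last by crd; nra.
apply/eqP => h; move/eqP: hu; apply; move: h; crd => h.
have h0 : u 0 i0 = 0 by nra.
have h1 : u 0 i1 = 0 by nra.
have h2 : u 0 i2 = 0 by nra.
by apply: eq3; crd.
Qed.

Lemma dot_eq (w x y : pt) : dotv w (y - x) = 0 -> dotv w y = dotv w x.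
Proof. by rewrite dotBr => /eqP; rewrite subr_eq0 => /eqP. Qed.

Lemma cross_par m w : cross m w = 0 -> (dotv w w) *: m = (dotv m w) *: w.
Proof.
move=> h.
have c0 := congr1 (fun z : pt => z 0 i0) h.
have c1 := congr1 (fun z : pt => z 0 i1) h.
have c2 := congr1 (fun z : pt => z 0 i2) h.
move: c0 c1 c2; crd => c0 c1 c2.
apply: eq3; crd; apply/eqP; rewrite -subr_eq0; apply/eqP.
- by apply: (lin_comb (a := w 0 i1) (b := - w 0 i2) _ c2 c1); ring.
- by apply: (lin_comb (a := - w 0 i0) (b := w 0 i2) _ c2 c0); ring.
- by apply: (lin_comb (a := w 0 i0) (b := - w 0 i1) _ c1 c0); ring.
Qed.

Lemma cross_perp m u v : dotv m u = 0 -> dotv m v = 0 -> cross m (cross u v) = 0.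
Proof.
move=> hu hv; move: (hu) (hv); crd => hu' hv'.
apply: eq3; crd.
- by apply: (lin_comb (a := u 0 i0) (b := - v 0 i0) _ hv' hu'); ring.
- by apply: (lin_comb (a := u 0 i1) (b := - v 0 i1) _ hv' hu'); ring.
- by apply: (lin_comb (a := u 0 i2) (b := - v 0 i2) _ hv' hu'); ring.
Qed.

Definition par (m w : pt) := exists k : R, k != 0 /\ m = k *: w.

Lemma par_of m w : w != 0 -> m != 0 -> cross m w = 0 -> par m w.
Proof.
move=> hw hm h; have e := cross_par h.
have ww := dot_gt0 hw.
have hk : dotv m w != 0.
  apply/eqP => h0; move: e; rewrite h0 scale0r => /eqP.
  by rewrite scaler_eq0 (negbTE hm) orbF (gt_eqF ww).
exists (dotv m w / dotv w w); split; first by rewrite mulf_neq0 // invr_neq0 // gt_eqF.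
have e2 := congr1 (fun z => (dotv w w)^-1 *: z) e; move: e2 => /= e2.
rewrite !scalerA mulVf ?lt0r_neq0 // scale1r in e2. by rewrite {1}e2 mulrC.
Qed.

Lemma par_dot0 m w z : par m w -> (dotv m z = 0 <-> dotv w z = 0).
Proof.
case=> k [hk ->]; rewrite dotZl; split => h; last by rewrite h mulr0.
by move/eqP: h; rewrite mulf_eq0 (negbTE hk) => /eqP.
Qed.

Lemma plane_rep (G : pt -> Prop) m (c : R) w (b : pt) :
  (forall x, G x <-> hyperplane m c x) -> G b -> par m w ->
  forall x, G x <-> hyperplane w (dotv w b) x.
Proof.
move=> hG hb [k [hk em]] x; rewrite hG /hyperplane.
have cb : c = dotv m b by move/hG: hb.
rewrite cb em !dotZl; split => [h|->] //.
by apply: (mulfI hk).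
Qed.

Lemma cross_ne0 x y : x != 0 -> y != 0 -> dotv x y = 0 -> cross x y != 0.
Proof.
move=> hx hy hxy; apply/eqP => h.
have := lagrange x y; rewrite h dot0l hxy expr2 mulr0 subr0 => /esym/eqP.
by rewrite mulf_eq0 !gt_eqF ?dot_gt0.
Qed.

Lemma same_set m (m' : pt) (c c' : R) : m != 0 -> m' != 0 ->
  (forall x, dotv m x = c <-> dotv m' x = c') -> par m' m.
Proof.
move=> hm hm' h; apply: par_of => //.
set x0 := (c / dotv m m) *: m.
have hx0 : dotv m x0 = c by rewrite dotC dotZl; field; rewrite lt0r_neq0 ?dot_gt0.
have k : forall e, dotv m' (cross e m) = 0.
  move=> e; have := (proj1 (h (x0 + cross e m))).
  rewrite dotDr hx0 dotC dot_crossr addr0 => /(_ erefl).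
  by rewrite dotDr (proj1 (h x0) hx0) => /eqP; rewrite -subr_eq0 addrC addKr => /eqP.
have k0 := k (mk3 1 0 0); have k1 := k (mk3 0 1 0); have k2 := k (mk3 0 0 1).
move: k0 k1 k2; crd => k0 k1 k2.
apply: eq3; crd.
- by apply: (lin_comb (a := -1) (b := 0) _ k0 k0); ring.
- by apply: (lin_comb (a := -1) (b := 0) _ k1 k1); ring.
- by apply: (lin_comb (a := -1) (b := 0) _ k2 k2); ring.
Qed.


Lemma sq_trick (s x1 x2 y1 y2 a b n1 n2 : R) : s != 0 ->
  s * x1 = a * n1 -> s * x2 = a * n2 -> s * y1 = b * n1 -> s * y2 = b * n2 ->
  x1 * y2 - x2 * y1 = 0.
Proof.
move=> hs h1 h2 h3 h4.
have : s * s * (x1 * y2 - x2 * y1) == 0.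
  have -> : s * s * (x1 * y2 - x2 * y1) = (s * x1) * (s * y2) - (s * x2) * (s * y1) by ring.
  by rewrite h1 h2 h3 h4; apply/eqP; ring.
by rewrite !mulf_eq0 (negbTE hs) /= => /eqP.
Qed.

Lemma cross_both N d e : N != 0 -> cross N d = 0 -> cross N e = 0 -> cross d e = 0.
Proof.
move=> hN hd he.
have hdN : cross d N = 0 by rewrite crossC hd oppr0.
have ed := cross_par hdN.
have heN : cross e N = 0 by rewrite crossC he oppr0.
have ee := cross_par heN.
have hs : dotv N N != 0 := lt0r_neq0 (dot_gt0 hN).
have d0 := congr1 (fun z : pt => z 0 i0) ed; have d1 := congr1 (fun z : pt => z 0 i1) ed.
have d2 := congr1 (fun z : pt => z 0 i2) ed.
have e0 := congr1 (fun z : pt => z 0 i0) ee; have e1 := congr1 (fun z : pt => z 0 i1) ee.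
have e2 := congr1 (fun z : pt => z 0 i2) ee.
move: d0 d1 d2 e0 e1 e2; rewrite !mxE => d0 d1 d2 e0 e1 e2.
apply: eq3; crd.
- exact: (sq_trick hs d1 d2 e1 e2).
- exact: (sq_trick hs d2 d0 e2 e0).
- exact: (sq_trick hs d0 d1 e0 e1).
Qed.

Lemma noncol (X : seq pt) x y z : general_position X -> uniq [:: x; y; z] ->
  {subset [:: x; y; z] <= X} -> cross (y - x) (z - x) != 0.
Proof.
case=> _ hL _ _ _ hu hs; apply/eqP => h0.
have hxy : y - x != 0.
  rewrite subr_eq0; move: hu => /= /andP [] ; rewrite !inE negb_or => /andP [hh _] _.
  by rewrite eq_sym.
apply: (hL (fun t => exists s, t = x + s *: (y - x)) _ [:: x; y; z] hu erefl hs).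
  by exists x, (y - x); split.
move=> t; rewrite !inE => /or3P [] /eqP ->.
- by exists 0; rewrite scale0r addr0.
- by exists 1; rewrite scale1r addrC subrK.
- exists (dotv (z - x) (y - x) / dotv (y - x) (y - x)).
  have h1 : cross (z - x) (y - x) = 0 by rewrite crossC h0 oppr0.
  have e := cross_par h1.
  have e2 := congr1 (fun w => (dotv (y - x) (y - x))^-1 *: w) e; move: e2 => /= e2.
  rewrite !scalerA mulVf ?lt0r_neq0 ?dot_gt0 // scale1r in e2.
  by rewrite mulrC -e2 addrC subrK.
Qed.

End S.

Lemma in3 (R : realType) (P : 'rV[R]_3 -> Prop) p q r t :
  t \in [:: p; q; r] -> P p -> P q -> P r -> P t.
Proof. by rewrite !inE => /or3P [] /eqP ->. Qed.

Lemma in6 (R : realType) (P : 'rV[R]_3 -> Prop) p q r a b c t :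
  t \in [:: p; q; r; a; b; c] -> P p -> P q -> P r -> P a -> P b -> P c -> P t.
Proof.
rewrite !inE => /orP [/eqP -> //|/orP [/eqP -> //|/orP [/eqP -> //|]]].
by move=> /orP [/eqP -> //|/orP [/eqP -> //|/eqP -> //]].
Qed.

Theorem mainTheorem7 (R : realType) (A1 A2 A3 : seq 'rV[R]_3) :
  uniq A1 -> uniq A2 -> uniq A3 ->
  size A1 = 3%N -> size A2 = 2%N -> size A3 = 1%N ->
  size (A1 ++ A2 ++ A3) = 6%N ->
  general_position (A1 ++ A2 ++ A3) ->
  exists H1 H2 H3 : 'rV[R]_3 -> Prop,
    [/\ mutually_orth3 H1 H2 H3,
        (forall a, a \in A1 -> H1 a),
        (forall a, a \in A2 -> H2 a),
        (forall a, a \in A3 -> H3 a)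
      & forall G1 G2 G3 : 'rV[R]_3 -> Prop,
          mutually_orth3 G1 G2 G3 ->
          (forall a, a \in A1 -> G1 a) ->
          (forall a, a \in A2 -> G2 a) ->
          (forall a, a \in A3 -> G3 a) ->
          forall x, [/\ G1 x <-> H1 x, G2 x <-> H2 x & G3 x <-> H3 x]].
Proof.
move=> u1 u2 u3 s1 s2 s3 _.
case: A1 u1 s1 => [|p [|q [|r [|? ?]]]] // u1 _.
case: A2 u2 s2 => [|a [|b [|? ?]]] // u2 _.
case: A3 u3 s3 => [|c [|? ?]] // _ _.
rewrite /= => gp.
have gp' := gp; case: gp' => hu _ _ hO _.
have habc : uniq [:: a; b; c].
  by move: hu => /= /andP [_ /andP [_ /andP [_ ->]]].
have hN : cross (q - p) (r - p) != 0.
  have hs : {subset [:: p; q; r] <= [:: p; q; r; a; b; c]}.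
    by move=> t ht; apply: (in3 (P := fun t => t \in [:: p; q; r; a; b; c]) ht); rewrite !inE eqxx ?orbT.
  exact: (noncol gp u1 hs).
have hd : cross (b - a) (c - a) != 0.
  have hs : {subset [:: a; b; c] <= [:: p; q; r; a; b; c]}.
    by move=> t ht; apply: (in3 (P := fun t => t \in [:: p; q; r; a; b; c]) ht); rewrite !inE eqxx ?orbT.
  exact: (noncol gp habc hs).
set N := cross (q - p) (r - p) in hN *.
have Nq : dotv N q = dotv N p by apply: dot_eq; exact: dot_crossl.
have Nr : dotv N r = dotv N p by apply: dot_eq; exact: dot_crossr.
have hn2 : cross N (b - a) != 0.
  apply/eqP => hn2.
  have hM : cross N (c - a) != 0.
    apply/eqP => hM; move/eqP: hd; apply; exact: cross_both hN hn2 hM.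
  apply: (hO (hyperplane N (dotv N p)) (hyperplane (cross N (c - a)) (dotv (cross N (c - a)) a))
     _ [:: p; q; r; a; b; c] hu erefl (fun t h => h)).
    exists N, (dotv N p), (cross N (c - a)), (dotv (cross N (c - a)) a); split => //.
    by rewrite dotC dot_crossl.
  move=> t ht; apply: (in6 (P := fun t => hyperplane N (dotv N p) t \/
     hyperplane (cross N (c - a)) (dotv (cross N (c - a)) a) t) ht).
  - by left.
  - by left.
  - by left.
  - by right.
  - right; apply: dot_eq; rewrite /hyperplane triple hn2 dot0l oppr0 //.
  - right; apply: dot_eq; exact: dot_crossr.
set n2 := cross N (b - a) in hn2 *.
have Nn2 : dotv N n2 = 0 by rewrite dotC dot_crossl.
have hn3 : cross N n2 != 0 by apply: cross_ne0.
set n3 := cross N n2 in hn3 *.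
have n2b : dotv n2 b = dotv n2 a by apply: dot_eq; exact: dot_crossr.
exists (hyperplane N (dotv N p)), (hyperplane n2 (dotv n2 a)), (hyperplane n3 (dotv n3 c)).
split.
- split.
  + exists N, (dotv N p), n2, (dotv n2 a); split => //.
  + exists N, (dotv N p), n3, (dotv n3 c); split => //.
    by rewrite dotC dot_crossl.
  + exists n2, (dotv n2 a), n3, (dotv n3 c); split => //.
    by rewrite dotC dot_crossr.
- move=> t ht; apply: (in3 (P := hyperplane N (dotv N p)) ht) => //.
- by move=> t; rewrite !inE => /orP [] /eqP ->.
- by move=> t; rewrite !inE => /eqP ->.
move=> G1 G2 G3; rewrite /mutually_orth3 /orth_planes; move=> [[m1 [c1 [m2 [c2 [hm1 hm2 hG1 hG2 o12]]]]]
   [m1' [c1' [m3 [c3 [hm1' hm3 hG1' hG3 o13]]]]]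
   [m2' [c2' [m3' [c3' [hm2' hm3' hG2' hG3' o23]]]]]] h1 h2 h3 x.
have Gp : G1 p by apply: h1; rewrite !inE eqxx.
have Gq : G1 q by apply: h1; rewrite !inE eqxx ?orbT.
have Gr : G1 r by apply: h1; rewrite !inE eqxx ?orbT.
have Ga : G2 a by apply: h2; rewrite !inE eqxx.
have Gb : G2 b by apply: h2; rewrite !inE eqxx ?orbT.
have Gc : G3 c by apply: h3; rewrite !inE eqxx.
have P1 : forall m (cc : R), m != 0 -> (forall x, G1 x <-> hyperplane m cc x) -> par m N.
  move=> m cc hm hG; apply: par_of => //; apply: cross_perp.
  - by rewrite dotBr (proj1 (hG q) Gq) (proj1 (hG p) Gp) subrr.
  - by rewrite dotBr (proj1 (hG r) Gr) (proj1 (hG p) Gp) subrr.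
have pm1 := P1 _ _ hm1 hG1.
have pm1' := P1 _ _ hm1' hG1'.
have m2N : dotv m2 N = 0 by rewrite dotC; apply/(par_dot0 _ pm1).
have m2d : dotv m2 (b - a) = 0.
  by rewrite dotBr (proj1 (hG2 b) Gb) (proj1 (hG2 a) Ga) subrr.
have pm2 : par m2 n2 by apply: par_of => //; apply: cross_perp.
have m3N : dotv m3 N = 0 by rewrite dotC; apply/(par_dot0 _ pm1').
have pm2' : par m2' m2.
  apply: (@same_set _ m2 m2' c2 c2') => // y; split => H.
  - by apply/hG2'; apply/hG2.
  - by apply/hG2; apply/hG2'.
have pm3' : par m3' m3.
  apply: (@same_set _ m3 m3' c3 c3') => // y; split => H.
  - by apply/hG3'; apply/hG3.
  - by apply/hG3; apply/hG3'.
have m3n2 : dotv m3 n2 = 0.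
  apply/(par_dot0 _ pm3'); rewrite dotC; apply/(par_dot0 _ pm2).
  by apply/(par_dot0 _ pm2').
have pm3 : par m3 n3 by apply: par_of => //; apply: cross_perp.
split.
- exact: (plane_rep hG1 Gp pm1).
- exact: (plane_rep hG2 Ga pm2).
- exact: (plane_rep hG3 Gc pm3).
Qed.
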